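(* Let $n,s$ be integers with $s \geq n \geq 1$, and consider the following game played with $n$ dice, each having $s$ equally likely faces numbered $1,\dots,s$. At each turn, if $k \geq 1$ dice remain in play, all $k$ of them are rolled and every die showing the value $k$ is removed from play; the game ends when no dice remain. For a game that ends after finitely many turns, its signature is the sequence of $n$ numbers recording, for each die, the value it showed on the roll at which it was removed, listed in the order in which the dice were removed (dice removed on the same turn all show the same value, so their relative order does not matter). Then the number of distinct signatures that can arise from finite games is $2^{n-1}$.
   Context: A game is a (possibly infinite) sequence of turns as described; it is called finite if it consists of finitely many turns. The standing assumption $s \geq n$ guarantees that every value $k \in \{1,\dots,n\}$ is a face of each die. *)

(* Defs.v *)
From mathcomp Require Import all_boot.
Set Implicit Arguments. Unset Strict Implicit. Unset Printing Implicit Defensive.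

(* A turn with k dice remaining is recorded as the sequence r (of length k) of
   values shown by the k dice in play; each value lies in {1,...,s}. *)
Fixpoint finite_game (s k : nat) (rolls : seq (seq nat)) : bool :=
  match rolls with
  | [::] => k == 0
  | r :: rs =>
      [&& 0 < k, size r == k, all (fun v => 0 < v <= s) r
        & finite_game s (k - count_mem k r) rs]
  end.

Fixpoint signature (k : nat) (rolls : seq (seq nat)) : seq nat :=
  match rolls with
  | [::] => [::]
  | r :: rs => nseq (count_mem k r) k ++ signature (k - count_mem k r) rs
  end.

Definition is_signature (n s : nat) (sg : seq nat) : Prop :=
  exists rolls, finite_game s n rolls /\ signature n rolls = sg.

(* Main.v *)
Require Import Defs.
From mathcomp Require Import all_boot.
From mathcomp Require Import zify.

Fixpoint Ff (f k : nat) : seq (seq nat) :=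
  match f with
  | 0 => [:: [::]]
  | f'.+1 => if k == 0 then [:: [::]]
             else [seq nseq c k ++ t | c <- iota 1 k, t <- Ff f' (k - c)]
  end.

Definition g (j : nat) := if j == 0 then 1 else 2 ^ (j - 1).

Lemma sum_g k : 0 < k -> sumn [seq g (k - c) | c <- iota 1 k] = 2 ^ (k - 1).
Proof.
elim: k => // k IH _.
rewrite /= -(addn1 1) iotaDl.
have -> : [seq g (k.+1 - c) | c <- map (addn 1) (iota 1 k)]
          = [seq g (k - c) | c <- iota 1 k].
  by rewrite -map_comp; apply: eq_map => x /=; rewrite addnC addn1 subSS.
case: k IH => [|k] IH //.
rewrite IH // /g subSS subn0 /= subn1 /=.
by rewrite expnS mul2n -addnn.
Qed.

Lemma size_Ff f k : k <= f -> size (Ff f k) = g k.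
Proof.
elim: f k => [|f IH] k hk /=; first by move: hk; rewrite leqn0 => /eqP ->.
case: eqP => [->|/eqP k0] //.
rewrite size_allpairs_dep /g ifN // -sum_g ?lt0n //.
congr sumn; apply/eq_in_map => c; rewrite mem_iota => /andP [c1 c2].
apply: IH; lia.
Qed.

Lemma Ff_le f k sg : k <= f -> sg \in Ff f k -> all (fun v => v <= k) sg.
Proof.
elim: f k sg => [|f IH] k sg hk /=; first by rewrite inE => /eqP ->.
case: eqP => [_|/eqP k0]; first by rewrite inE => /eqP ->.
case/allpairsPdep => c [t [hc ht ->]].
move: hc; rewrite mem_iota => /andP [c1 c2].
rewrite all_cat; apply/andP; split.
  by apply/allP => v /nseqP [-> _].
have := IH (k - c) t ltac:(lia) ht.
move/allP => H; apply/allP => v /H; lia.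
Qed.

Lemma uniq_Ff f k : k <= f -> uniq (Ff f k).
Proof.
elim: f k => [|f IH] k hk //=.
case: eqP => [_|/eqP k0] //.
apply: (@allpairs_uniq_dep _ (fun _ => seq nat)).
- exact: iota_uniq.
- move=> c; rewrite mem_iota => /andP [c1 c2]; apply: IH; lia.
- move=> [c1 t1] [c2 t2] /allpairsPdep [x1 [y1 [h1 hy1 [e1 e1']]]]
    /allpairsPdep [x2 [y2 [h2 hy2 [e2 e2']]]] /=.
  subst x1 x2. subst y1 y2.
  move: h1 h2; rewrite !mem_iota => /andP [a1 a2] /andP [b1 b2] E.
  have A1 := @Ff_le f (k - c1) _ ltac:(lia) hy1.
  have A2 := @Ff_le f (k - c2) _ ltac:(lia) hy2.
  have C : forall c t, 0 < c -> all (fun v => v <= k - c) t ->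
           count_mem k (nseq c k ++ t) = c.
    move=> c t cp /allP At; rewrite count_cat count_nseq /= eqxx mul1n.
    rewrite (eq_in_count (a2 := pred0)) ?count_pred0 ?addn0 //.
    move=> v /At /=; apply/contraTF => /eqP ->; lia.
  have ec : c1 = c2 by rewrite -(C c1 t1) // E C.
  subst c2; move: E => /eqP; rewrite eqseq_cat ?size_nseq // eqxx /= => /eqP ->.
  by [].
Qed.

Lemma Ff_sig f k s sg : k <= f -> k <= s -> sg \in Ff f k -> is_signature k s sg.
Proof.
elim: f k sg => [|f IH] k sg hk hs /=.
  by move: hk; rewrite leqn0 => /eqP -> ; rewrite inE => /eqP ->; exists [::].
case: eqP => [->|/eqP k0]; first by rewrite inE => /eqP ->; exists [::].
case/allpairsPdep => c [t [hc ht ->]].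
move: hc; rewrite mem_iota => /andP [c1 c2].
have [rs [Hg Hs]] := IH (k - c) t ltac:(lia) ltac:(lia) ht.
have cnt : count_mem k (nseq c k ++ nseq (k - c) 1) = c.
  rewrite count_cat !count_nseq /= eqxx /=.
  case: (k - c =P 0) => [->|nz]; first lia.
  have -> : (1 == k) = false by apply/eqP; lia.
  lia.
exists ((nseq c k ++ nseq (k - c) 1) :: rs); split.
- rewrite /= cnt Hg size_cat !size_nseq.
  rewrite all_cat; apply/and4P; split; first lia; first (apply/eqP; lia).
  + apply/andP; split; apply/allP => v /nseqP [-> _]; lia.
  + by [].
- by rewrite /= cnt Hs.
Qed.

Lemma sig_Ff s rs : forall f k, k <= f -> finite_game s k rs -> signature k rs \in Ff f k.
Proof.
elim: rs => [|r rs IH] f k hk /=.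
  by move/eqP => ->; case: f hk => [|f] _ /=; rewrite inE.
case/and4P => k0 /eqP sr _ Hg.
case: f hk => [|f] hk; first lia.
rewrite /=; case: eqP => [e|_]; first by move: k0; rewrite e.
have cle : count_mem k r <= k by rewrite -{2}sr count_size.
case: (count_mem k r =P 0) => [c0|/eqP c0].
  move: Hg; rewrite c0 subn0 => Hg.
  have := IH f.+1 k hk Hg.
  by rewrite /= ifN ?lt0n_neq0 // nseq0 cat0s.
apply: (@allpairs_f_dep _ (fun _ => seq nat) _ (fun c t => nseq c k ++ t)).
  by rewrite mem_iota -lt0n in c0 *; rewrite c0 /= add1n ltnS.
apply: IH => //; move: c0 hk; set c := count_mem k r; lia.
Qed.

Theorem proposition2p7 (n s : nat) (hn : 1 <= n) (hsn : n <= s) :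
  exists S : seq (seq nat),
    [/\ uniq S, size S = 2 ^ (n - 1) &
        forall sg : seq nat, sg \in S <-> is_signature n s sg].
Proof.
exists (Ff n n); split.
- exact: uniq_Ff.
- by rewrite size_Ff // /g; case: n hn {hsn}.
- move=> sg; split; first exact: Ff_sig.
  by case=> rs [Hg <-]; exact: (sig_Ff s rs n n (leqnn n) Hg).
Qed.
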